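(* Let $X$ be a finite, connected, vertex-transitive graph with vertex set $V$, $|V|=n$, equipped with the graph (shortest-path) distance $d$, and let $D$ be its diameter. Let $A=\frac{1}{n^2}\sum_{x,y\in V} d(x,y)$ (sum over all ordered pairs, including $x=y$). Then $$\frac{D}{2}\le A\le \Big(1-\frac1n\Big)D.$$ Moreover, if $n\ge 2$ and $\bar A=\frac{1}{n(n-1)}\sum_{x\neq y} d(x,y)$ (sum over ordered pairs of distinct vertices), then $$\frac{D}{2}\cdot\frac{n}{n-1}\le \bar A\le D.$$
   Context: A graph is vertex-transitive if its automorphism group acts transitively on its vertices. *)

(* Defs.v *)
From HB Require Import structures.
From mathcomp Require Import all_boot all_order all_algebra all_fingroup.
Set Implicit Arguments. Unset Strict Implicit. Unset Printing Implicit Defensive.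

Definition simple_graph (T : finType) (e : rel T) : Prop :=
  symmetric e /\ irreflexive e.

Definition connected_graph (T : finType) (e : rel T) : Prop :=
  forall x y : T, connect e x y.

Definition vertex_transitive (T : finType) (e : rel T) : Prop :=
  forall x y : T, exists f : {perm T},
    (forall a b : T, e (f a) (f b) = e a b) /\ f x = y.

Definition walk_of_len (T : finType) (e : rel T) (k : nat) (x y : T) : bool :=
  [exists p : k.-tuple T, path e x p && (last x p == y)].

(* Shortest-path distance: the least k with a walk of length k from x to y.
   In a connected graph this is always < #|T|; for unreachable pairs
   the value is #|T| (irrelevant under connectivity). *)
Definition gdist (T : finType) (e : rel T) (x y : T) : nat :=
  find (fun k => walk_of_len e k x y) (iota 0 #|T|).

Definition diameter (T : finType) (e : rel T) : nat :=
  \max_(x : T) \max_(y : T) gdist e x y.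

Local Open Scope ring_scope.

Definition avg_dist (T : finType) (e : rel T) : rat :=
  (\sum_(x : T) \sum_(y : T) gdist e x y)%N%:R / (#|T| ^ 2)%N%:R.

Definition avg_dist_distinct (T : finType) (e : rel T) : rat :=
  (\sum_(x : T) \sum_(y : T | y != x) gdist e x y)%N%:R
    / (#|T| * (#|T| - 1))%N%:R.

(* Main.v *)
Require Import Defs.
From HB Require Import structures.
From mathcomp Require Import all_boot all_order all_algebra all_fingroup.
From mathcomp Require Import ring lra.
Import Order.TTheory GRing.Theory Num.Theory.


Section G.
Variables (T : finType) (e : rel T).

Lemma walkP k x y :
  reflect (exists p : seq T, [/\ size p = k, path e x p & last x p = y])
          (walk_of_len e k x y).
Proof.
apply: (iffP existsP).
  by move=> [t /andP[Hp /eqP Hl]]; exists (val t); rewrite size_tuple.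
move=> [p [Hs Hp Hl]]; subst k.
by exists (in_tuple p); rewrite /= Hp Hl eqxx.
Qed.

Lemma gdist_le k x y : walk_of_len e k x y -> (gdist e x y <= k)%N.
Proof.
move=> W; case: (ltnP k #|T|) => Hk.
  rewrite leqNgt; apply/negP => /(before_find 0).
  by rewrite nth_iota // add0n W.
apply: leq_trans Hk; rewrite /gdist.
by apply: leq_trans (find_size _ _) _; rewrite size_iota.
Qed.

Lemma gdist_walk x y : connect e x y ->
  walk_of_len e (gdist e x y) x y /\ (gdist e x y < #|T|)%N.
Proof.
move=> /connectP [p Hp ->].
case: (shortenP Hp) => p' Hp' Hu _.
have Hs : (size p' < #|T|)%N.
  have := max_card (mem (x :: p')).
  by rewrite (card_uniqP Hu).
have W : walk_of_len e (size p') x (last x p') by apply/walkP; exists p'.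
have Hh : has (fun k => walk_of_len e k x (last x p')) (iota 0 #|T|).
  by apply/hasP; exists (size p'); rewrite // mem_iota.
have Hf := Hh; rewrite has_find size_iota in Hf.
split => //.
have := nth_find 0 Hh; rewrite nth_iota ?add0n //.
Qed.

Hypothesis Hconn : connected_graph e.

Lemma gdist_xx x : gdist e x x = 0%N.
Proof. by apply/eqP; rewrite -leqn0; apply: gdist_le; apply/walkP; exists [::]. Qed.

Lemma gdist_tri x y z : (gdist e x z <= gdist e x y + gdist e y z)%N.
Proof.
have [/walkP [p [Hs Hp Hl]] _] := @gdist_walk x y (Hconn x y).
have [/walkP [q [Hs' Hq Hl']] _] := @gdist_walk y z (Hconn y z).
apply: gdist_le; apply/walkP; exists (p ++ q).
by rewrite size_cat cat_path last_cat Hl Hs Hs' Hp Hq.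
Qed.

Lemma walk_auto (f : {perm T}) k x y :
  (forall a b, e (f a) (f b) = e a b) ->
  walk_of_len e k x y -> walk_of_len e k (f x) (f y).
Proof.
move=> Hf /walkP [p [Hs Hp Hl]]; apply/walkP; exists (map f p).
rewrite size_map last_map Hl path_map; split => //.
by rewrite (eq_path (e' := e)) // => a b; rewrite /relpre /= Hf.
Qed.

Lemma gdist_auto (f : {perm T}) x y :
  (forall a b, e (f a) (f b) = e a b) ->
  gdist e (f x) (f y) = gdist e x y.
Proof.
move=> Hf; rewrite /gdist; apply: eq_find => k.
apply/idP/idP; last exact: walk_auto.
have Hf' : forall a b, e ((f^-1)%g a) ((f^-1)%g b) = e a b.
  by move=> a b; rewrite -Hf !permKV.
by move/(@walk_auto _ _ _ _ Hf'); rewrite !permK.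
Qed.
End G.

Lemma natfacts (T : finType) (e : rel T)
  (Hne : (0 < #|T|)%N)
  (Hconn : connected_graph e) (Hvt : vertex_transitive e) :
  let Tot := (\sum_(x : T) \sum_(y : T) gdist e x y)%N in
  [/\ (#|T| * (#|T| * diameter e) <= 2 * Tot)%N,
      (Tot <= #|T| * ((#|T| - 1) * diameter e))%N &
      (\sum_(x : T) \sum_(y : T | y != x) gdist e x y)%N = Tot].
Proof.
move=> Tot.
have [x0 _] := card_gt0P Hne.
have Hrow x : (\sum_y gdist e x y = \sum_y gdist e x0 y)%N.
  have [f [Hf <-]] := Hvt x0 x.
  rewrite (reindex_inj (@perm_inj _ f)) /=.
  by apply: eq_bigr => y _; rewrite gdist_auto.
have Hcol y : (\sum_x gdist e x y = \sum_x gdist e x x0)%N.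
  have [f [Hf <-]] := Hvt x0 y.
  rewrite (reindex_inj (@perm_inj _ f)) /=.
  by apply: eq_bigr => x _; rewrite gdist_auto.
have Hconst (c : nat) : (\sum_(x : T) c = #|T| * c)%N.
  by rewrite sum_nat_const.
have TotR : Tot = (#|T| * \sum_y gdist e x0 y)%N.
  by rewrite /Tot (eq_bigr _ (fun x _ => Hrow x)) Hconst.
have TotC : Tot = (#|T| * \sum_x gdist e x x0)%N.
  by rewrite /Tot exchange_big /= (eq_bigr _ (fun y _ => Hcol y)) Hconst.
have Hdist : (\sum_(x : T) \sum_(y : T | y != x) gdist e x y)%N = Tot.
  apply: eq_bigr => x _.
  by rewrite [in RHS](bigD1 x) //= gdist_xx.
have Hmax x y : (gdist e x y <= diameter e)%N.
  have h1 := @leq_bigmax _ (fun y => gdist e x y) y.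
  have h2 := @leq_bigmax _ (fun x => \max_y gdist e x y) x.
  exact: leq_trans h1 h2.
split => //; last first.
  rewrite TotR leq_mul2l; apply/orP; right.
  rewrite (bigD1 x0) //= gdist_xx add0n.
  have -> : ((#|T| - 1) * diameter e = \sum_(y | y != x0) diameter e)%N.
    by rewrite sum_nat_const cardC1 subn1.
  by apply: leq_sum => y _; apply: Hmax.
have [u [v HD]] : exists u v, diameter e = gdist e u v.
  by rewrite /diameter (bigop.bigmax_eq_arg x0) // (bigop.bigmax_eq_arg x0) //; eexists; eexists.
have H1 : (#|T| * diameter e <= \sum_y gdist e u y + \sum_y gdist e y v)%N.
  rewrite -big_split /= -Hconst HD.
  by apply: leq_sum => y _; apply: gdist_tri.
rewrite Hrow Hcol in H1.
rewrite mul2n -addnn {1}TotR TotC -mulnDr leq_mul2l H1 orbT //.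
Qed.

Local Open Scope ring_scope.

Theorem theorem1p1 (T : finType) (e : rel T)
  (Hsimple : simple_graph e) (Hne : (0 < #|T|)%N)
  (Hconn : connected_graph e) (Hvt : vertex_transitive e) :
  let n : rat := (#|T|)%:R in
  let D : rat := (diameter e)%:R in
  (D / 2 <= avg_dist e /\ avg_dist e <= (1 - n^-1) * D) /\
  ((1 < #|T|)%N ->
     D / 2 * (n / (n - 1)) <= avg_dist_distinct e /\ avg_dist_distinct e <= D).
Proof.
move=> n D.
have [h1 h2 h3] := @natfacts T e Hne Hconn Hvt.
rewrite /avg_dist /avg_dist_distinct h3.
set t : rat := (\sum_x \sum_y gdist e x y)%N%:R.
have r1 : n * (n * D) <= 2 * t.
  by rewrite /n /D /t -!natrM ler_nat.
have r2 : t <= n * ((n - 1) * D).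
  by move: h2; rewrite -(ler_nat rat) !natrM natrB.
have n0 : 0 < n by rewrite /n ltr0n.
have D0 : 0 <= D by rewrite /D ler0n.
have nn0 : n != 0 by rewrite gt_eqF.
rewrite natrX -/n.
split.
  split; rewrite -subr_ge0.
    have -> : t / n ^+ 2 - D / 2 = (2 * t - n * (n * D)) / (2 * n ^+ 2) by field.
    by apply: divr_ge0; [rewrite subr_ge0 | rewrite mulr_ge0 // ?exprn_ge0 // ltW].
  have -> : (1 - n^-1) * D - t / n ^+ 2 = (n * ((n - 1) * D) - t) / (n ^+ 2) by field.
  by apply: divr_ge0; [rewrite subr_ge0 | rewrite exprn_ge0 // ltW].
move=> H1.
have n1 : 1 < n by rewrite /n ltr1n.
have n10 : n - 1 != 0 by rewrite gt_eqF // subr_gt0.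
rewrite natrM natrB 1?ltnW // -/n.
split; rewrite -subr_ge0.
  have -> : t / (n * (n - 1)) - D / 2 * (n / (n - 1)) = (2 * t - n * (n * D)) / (2 * (n * (n - 1))) by field; rewrite ?mulf_neq0 // ?n10 ?nn0.
  apply: divr_ge0; first by rewrite subr_ge0.
  by rewrite !mulr_ge0 // ?subr_ge0 ltW.
have -> : D - t / (n * (n - 1)) = (n * ((n - 1) * D) - t) / (n * (n - 1)) by field; rewrite ?mulf_neq0 // ?n10 ?nn0.
apply: divr_ge0; first by rewrite subr_ge0.
by rewrite !mulr_ge0 // ?subr_ge0 ltW.
Qed.
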